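(* Let $t\in\{w,m\}$ index two types with masses $\mu_w>0,\mu_m>0$, $r:=\mu_w/\mu_m$. Suppose there are parameters $r^e_t\in(0,1)$, $c_t\ge0$, $C_t>0$ ($t\in\{w,m\}$) such that for all $u\in(0,1)$, $$h_t(u)=\frac{c_t}{u},\qquad F_{\Delta_t}^{-1}(1-u)=C_t\,\frac{r^e_t-u}{u(1-u)},$$ where $F_{\Delta_t}$ is the cumulative distribution function of the sector-1 advantage $\Delta_t=Y_{1t}-Y_{2t}$. Let $\gamma_w:=\frac{\mu_m}{\mu_w}\frac{c_w}{C_w}$ and $\gamma_m:=\frac{\mu_w}{\mu_m}\frac{c_m}{C_m}$. If $0<r^e_w<r^e_m<1$ and $\gamma_w+\gamma_m<1$, then there is a unique equilibrium $(r_w^*,r_m^* )$, and: (1) if $\bar\gamma:=\max\{\gamma_w r^e_m/r^e_w+\gamma_m,\ \gamma_w+\gamma_m(1-r^e_w)/(1-r^e_m)\}<1$, then $$r_w^*=r_w^e-\frac{\gamma_w}{1-\gamma_w-\gamma_m}(r_m^e-r_w^e),\qquad r_m^*=r_m^e+\frac{\gamma_m}{1-\gamma_w-\gamma_m}(r_m^e-r_w^e);$$ (2) if $\gamma_w r^e_m/r^e_w+\gamma_m\ge1$ and $\gamma_m<1-r^e_m$, then $r_w^*=0$ and $r_m^*=r^e_m/(1-\gamma_m)$; (3) if $\gamma_w<r^e_w$ and $\gamma_w+\gamma_m(1-r^e_w)/(1-r^e_m)\ge1$, then $r_w^*=(r^e_w-\gamma_w)/(1-\gamma_w)$ and $r_m^*=1$;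 (4) if $\gamma_w\ge r^e_w$ and $\gamma_m\ge1-r^e_m$, then $r_w^*=0$ and $r_m^*=1$.
   Context: For $x,y\in(0,1)$, $z>0$, define $g_t(x,y,z):=h_t\left(\frac{1}{1+z y/x}\right)-h_t\left(\frac{1}{1+z(1-y)/(1-x)}\right)$. A composition is a pair $(r_w,r_m)\in[0,1]^2$, $r_t$ being the share of type-$t$ individuals choosing sector 1. An equilibrium is a composition $(r_w^*,r_m^* )$ such that: (i) if $r_w^*\in(0,1)$ then $F_{\Delta_w}^{-1}(1-r_w^* )=g_w(r_w^*,r_m^*,1/r)$, and if $r_m^*\in(0,1)$ then $F_{\Delta_m}^{-1}(1-r_m^* )=g_m(r_m^*,r_w^*,r)$; (ii) if $r_w^*=0$, there is $\bar\delta>0$ such that for all $0<\delta<\bar\delta$, $F_{\Delta_w}^{-1}(1-\delta)\le g_w(\delta,r_m^*,1/r)$; (iii) if $r_m^*=1$, there is $\bar\delta>0$ such that for all $0<\delta<\bar\delta$, $F_{\Delta_m}^{-1}(\delta)\ge g_m(1-\delta,r_w^*,r)$; (iv) symmetrically, if $r_w^*=1$, there is $\bar\delta>0$ such that for all $0<\delta<\bar\delta$, $F_{\Delta_w}^{-1}(\delta)\ge g_w(1-\delta,r_m^*,1/r)$, and if $r_m^*=0$, there is $\bar\delta>0$ such that for all $0<\delta<\bar\delta$, $F_{\Delta_m}^{-1}(1-\delta)\le g_m(\delta,r_w^*,r)$. *)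

(* Defs.v *)
From Stdlib Require Export Reals.
Open Scope R_scope.

Definition g (h : R -> R) (x y z : R) : R :=
  h (1 / (1 + z * y / x)) - h (1 / (1 + z * (1 - y) / (1 - x))).

(* Equilibrium composition (rw, rm) in [0,1]^2, given the quantile functions
   Finv_w = F_{Delta_w}^{-1}, Finv_m = F_{Delta_m}^{-1}, the functions h_w, h_m,
   and the mass ratio r = mu_w / mu_m. *)
Definition is_equilibrium (Finv_w Finv_m h_w h_m : R -> R) (r rw rm : R) : Prop :=
  0 <= rw <= 1 /\ 0 <= rm <= 1 /\
  (0 < rw < 1 -> Finv_w (1 - rw) = g h_w rw rm (1 / r)) /\
  (0 < rm < 1 -> Finv_m (1 - rm) = g h_m rm rw r) /\
  (rw = 0 -> exists dbar, dbar > 0 /\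
     forall d, 0 < d < dbar -> Finv_w (1 - d) <= g h_w d rm (1 / r)) /\
  (rw = 1 -> exists dbar, dbar > 0 /\
     forall d, 0 < d < dbar -> Finv_w d >= g h_w (1 - d) rm (1 / r)) /\
  (rm = 1 -> exists dbar, dbar > 0 /\
     forall d, 0 < d < dbar -> Finv_m d >= g h_m (1 - d) rw r) /\
  (rm = 0 -> exists dbar, dbar > 0 /\
     forall d, 0 < d < dbar -> Finv_m (1 - d) <= g h_m d rw r).

(* Main.v *)
Require Import Defs.
From Stdlib Require Import Reals.
Open Scope R_scope.
From Stdlib Require Import Lra Psatz.

Definition EqA (a b ew em x y : R) : Prop :=
  0 <= x <= 1 /\ 0 <= y <= 1 /\
  (0 < x < 1 -> ew - x = a * (y - x)) /\
  (0 < y < 1 -> em - y = b * (x - y)) /\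
  (x = 0 -> ew <= a * y) /\
  (x = 1 -> 1 - ew <= a * (1 - y)) /\
  (y = 1 -> 1 - em <= b * (1 - x)) /\
  (y = 0 -> em <= b * x).

Lemma tri01 x : 0 <= x <= 1 -> x = 0 \/ 0 < x < 1 \/ x = 1.
Proof.
  intros [H1 H2]. destruct H1 as [H1|H1]; [|left; auto].
  destruct H2 as [H2|H2]; [right; left; lra| right; right; auto].
Qed.

Lemma Rdiv_lt_1' x d : 0 < d -> x < d -> x / d < 1.
Proof. intros. apply (Rmult_lt_reg_r d); [lra|]. unfold Rdiv. rewrite Rmult_assoc, Rinv_l; lra. Qed.

Set Default Proof Using "All".
Section Alg.
Variables a b ew em : R.
Hypotheses (Ha : a >= 0) (Hb : b >= 0) (Hab : a + b < 1) (Hew : 0 < ew) (Hlt : ew < em) (Hem : em < 1).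

Definition c1 := a*em + b*ew - ew < 0 /\ a*(1-em) + b*(1-ew) - (1-em) < 0.
Definition c2 := a*em + b*ew - ew >= 0 /\ b < 1-em.
Definition c3 := a < ew /\ a*(1-em)+b*(1-ew)-(1-em) >= 0.
Definition c4 := a >= ew /\ b >= 1-em.
Definition X1 := ew - a / (1 - a - b) * (em - ew).
Definition Y1 := em + b / (1 - a - b) * (em - ew).

Lemma classify x y : EqA a b ew em x y ->
  (x = 0 /\ y = 1 /\ c4) \/ (x = 0 /\ y = em / (1 - b) /\ c2) \/
  (x = (ew - a) / (1 - a) /\ y = 1 /\ c3) \/ (x = X1 /\ y = Y1 /\ c1).
Proof.
  unfold c1, c2, c3, c4, X1, Y1.
  intros (Hx & Hy & E1 & E2 & B0 & B1 & C1 & C0).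
  destruct (tri01 x Hx) as [x0|[xi|x1]]; destruct (tri01 y Hy) as [y0|[yi|y1]].
  - subst. specialize (C0 eq_refl). lra.
  - subst. specialize (E2 yi). specialize (B0 eq_refl).
    assert (y * (1 - b) = em) by lra.
    right; left. split; [auto|]. split. field_simplify_eq; lra.
    split; nra.
  - subst. left. specialize (B0 eq_refl). specialize (C1 eq_refl). lra.
  - subst. specialize (E1 xi). specialize (C0 eq_refl).
    assert (x * (1 - a) = ew) by lra. nra.
  - specialize (E1 xi). specialize (E2 yi).
    assert (Hx1 : x * (1 - a - b) = (1 - b) * ew - a * em) by nra.
    assert (Hy1 : y * (1 - a - b) = (1 - a) * em - b * ew) by nra.
    right; right; right. split; [|split].
    + apply (Rmult_eq_reg_r (1 - a - b)); [|lra]. rewrite Hx1. field. lra.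
    + apply (Rmult_eq_reg_r (1 - a - b)); [|lra]. rewrite Hy1. field. lra.
    + split; nra.
  - subst. specialize (E1 xi). specialize (C1 eq_refl).
    assert (x * (1 - a) = ew - a) by lra.
    right; right; left. split. field_simplify_eq; lra.
    split; [auto|]. split; nra.
  - subst. specialize (B1 eq_refl). specialize (C0 eq_refl). lra.
  - subst. specialize (B1 eq_refl). specialize (E2 yi).
    assert ((1 - y) * (1 - b) = 1 - em) by lra. nra.
  - subst. specialize (B1 eq_refl). lra.
Qed.

Lemma cover : c1 \/ c2 \/ c3 \/ c4.
Proof.
  unfold c1, c2, c3, c4.
  set (p := a*em + b*ew - ew). set (q := a*(1-em)+b*(1-ew)-(1-em)).
  assert (I1 : (1-ew)*p - ew*q = (a-ew)*(em-ew)) by (unfold p, q; ring).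
  assert (I2 : (1-em)*p - em*q = (em-ew)*(1-em-b)) by (unfold p, q; ring).
  destruct (Rlt_or_le p 0); destruct (Rlt_or_le q 0).
  - left; auto.
  - destruct (Rlt_or_le a ew).
    + right; right; left; lra.
    + right; right; right. split; [lra|]. nra.
  - destruct (Rlt_or_le b (1-em)).
    + right; left; lra.
    + right; right; right. split; [|lra]. nra.
  - destruct (Rlt_or_le b (1-em)).
    + right; left; lra.
    + destruct (Rlt_or_le a ew).
      * right; right; left; lra.
      * right; right; right; lra.
Qed.

Lemma excl24 : c2 -> c4 -> False.  Proof. unfold c2, c4; lra. Qed.
Lemma excl34 : c3 -> c4 -> False.  Proof. unfold c3, c4; lra. Qed.
Lemma excl14 : c1 -> c4 -> False.  Proof. unfold c1, c4; nra. Qed.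
Lemma excl12 : c1 -> c2 -> False.  Proof. unfold c1, c2; lra. Qed.
Lemma excl13 : c1 -> c3 -> False.  Proof. unfold c1, c3; lra. Qed.
Lemma excl23 : c2 -> c3 -> False.  Proof. unfold c2, c3; nra. Qed.

Lemma L1 x y : EqA a b ew em x y -> c1 -> x = X1 /\ y = Y1.
Proof. intros H c. destruct (classify x y H) as [(_&_&h)|[(_&_&h)|[(_&_&h)|h]]];
  [destruct (excl14 c h)|destruct (excl12 c h)|destruct (excl13 c h)|tauto]. Qed.
Lemma L2 x y : EqA a b ew em x y -> c2 -> x = 0 /\ y = em / (1 - b).
Proof. intros H c. destruct (classify x y H) as [(_&_&h)|[(?&?&h)|[(_&_&h)|(_&_&h)]]];
  [destruct (excl24 c h)|tauto|destruct (excl23 c h)|destruct (excl12 h c)]. Qed.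
Lemma L3 x y : EqA a b ew em x y -> c3 -> x = (ew - a) / (1 - a) /\ y = 1.
Proof. intros H c. destruct (classify x y H) as [(_&_&h)|[(_&_&h)|[(?&?&h)|(_&_&h)]]];
  [destruct (excl34 c h)|destruct (excl23 h c)|tauto|destruct (excl13 h c)]. Qed.
Lemma L4 x y : EqA a b ew em x y -> c4 -> x = 0 /\ y = 1.
Proof. intros H c. destruct (classify x y H) as [(?&?&h)|[(_&_&h)|[(_&_&h)|(_&_&h)]]];
  [tauto|destruct (excl24 h c)|destruct (excl34 h c)|destruct (excl14 h c)]. Qed.

Lemma E1 : c1 -> EqA a b ew em X1 Y1.
Proof.
  unfold c1, X1, Y1. intros [p q].
  assert (Hd : 1 - a - b > 0) by lra.
  assert (Xe : ew - a / (1 - a - b) * (em - ew) = ((1-b)*ew - a*em)/(1-a-b)) by (field; lra).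
  assert (Ye : em + b / (1 - a - b) * (em - ew) = ((1-a)*em - b*ew)/(1-a-b)) by (field; lra).
  rewrite Xe, Ye.
  assert (x0 : 0 < ((1-b)*ew - a*em)/(1-a-b)) by (apply Rdiv_lt_0_compat; lra).
  assert (x1 : ((1-b)*ew - a*em)/(1-a-b) < 1) by (apply Rdiv_lt_1'; nra).
  assert (y0 : 0 < ((1-a)*em - b*ew)/(1-a-b)) by (apply Rdiv_lt_0_compat; nra).
  assert (y1 : ((1-a)*em - b*ew)/(1-a-b) < 1) by (apply Rdiv_lt_1'; nra).
  repeat split; intros; try lra; field; lra.
Qed.

Lemma E2 : c2 -> EqA a b ew em 0 (em / (1 - b)).
Proof.
  unfold c2. intros [p q].
  assert (y0 : 0 < em/(1-b)) by (apply Rdiv_lt_0_compat; lra).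
  assert (y1 : em/(1-b) < 1) by (apply Rdiv_lt_1'; lra).
  repeat split; intros; try lra.
  - field; lra.
  - apply (Rmult_le_reg_r (1-b)); [lra|]. field_simplify; [nra|lra].
Qed.

Lemma E3 : c3 -> EqA a b ew em ((ew - a) / (1 - a)) 1.
Proof.
  unfold c3. intros [p q].
  assert (y0 : 0 < (ew-a)/(1-a)) by (apply Rdiv_lt_0_compat; lra).
  assert (y1 : (ew-a)/(1-a) < 1) by (apply Rdiv_lt_1'; lra).
  repeat split; intros; try lra.
  - field; lra.
  - apply (Rmult_le_reg_r (1-a)); [lra|].
    replace (b * (1 - (ew - a) / (1 - a)) * (1 - a)) with (b * (1 - ew)) by (field; lra).
    nra.
Qed.

Lemma E4 : c4 -> EqA a b ew em 0 1.
Proof. unfold c4. intros [p q]. repeat split; intros; lra. Qed.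

End Alg.

Section Side.
Variables (c C re z : R) (h F : R -> R).
Hypotheses (Hc : c >= 0) (HC : C > 0) (Hz : z > 0)
  (Hh : forall u, 0 < u <= 1 -> h u = c / u)
  (HF : forall u, 0 < u < 1 -> F (1 - u) = C * (re - u) / (u * (1 - u))).
Let k := z * c / C.
Hypothesis Hk : k < 1.

Lemma k_ge0 : 0 <= k.
Proof. unfold k. unfold Rdiv. apply Rmult_le_pos; [nra|]. left; apply Rinv_0_lt_compat; lra. Qed.

Lemma inv_in t : 0 <= t -> 0 < 1 / (1 + t) <= 1.
Proof. intros. split. apply Rdiv_lt_0_compat; lra.
  apply (Rmult_le_reg_r (1 + t)); [lra|]. unfold Rdiv. rewrite Rmult_assoc, Rinv_l; lra. Qed.

Lemma key x y : 0 < x < 1 -> 0 <= y <= 1 ->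
  F (1 - x) - g h x y z = C / (x * (1 - x)) * ((re - x) - k * (y - x)).
Proof.
  intros Hx Hy. unfold g, k.
  assert (t1 : 0 <= z * y / x) by (unfold Rdiv; apply Rmult_le_pos; [nra| left; apply Rinv_0_lt_compat; lra]).
  assert (t2 : 0 <= z * (1 - y) / (1 - x)) by (unfold Rdiv; apply Rmult_le_pos; [nra| left; apply Rinv_0_lt_compat; lra]).
  rewrite HF by lra. rewrite (Hh _ (inv_in _ t1)), (Hh _ (inv_in _ t2)).
  field. repeat split; try lra.
  all: nra.
Qed.

Lemma S_int x y : 0 < x < 1 -> 0 <= y <= 1 ->
  (F (1 - x) = g h x y z <-> re - x = k * (y - x)).
Proof.
  intros Hx Hy. pose proof (key x y Hx Hy) as K.
  assert (P : C / (x * (1 - x)) > 0) by (apply Rdiv_lt_0_compat; nra).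
  split; intro E.
  - rewrite E, Rminus_diag in K. symmetry in K.
    apply Rmult_integral in K. destruct K; lra.
  - rewrite E in K. replace (k * (y - x) - k * (y - x)) with 0 in K by ring. lra.
Qed.

Lemma S_lo y : 0 <= y <= 1 ->
  ((exists dbar, dbar > 0 /\ forall d, 0 < d < dbar -> F (1 - d) <= g h d y z) <-> re <= k * y).
Proof.
  intros Hy. pose proof k_ge0 as K0. split.
  - intros [dbar [Hd H]]. destruct (Rle_lt_dec re (k * y)) as [|Hgt]; [auto|exfalso].
    set (d := Rmin dbar (Rmin 1 (re - k * y)) / 2).
    assert (m1 := Rmin_l dbar (Rmin 1 (re - k*y))).
    assert (m2 := Rmin_r dbar (Rmin 1 (re - k*y))).
    assert (m3 := Rmin_l 1 (re - k*y)). assert (m4 := Rmin_r 1 (re - k*y)).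
    assert (m5 : 0 < Rmin dbar (Rmin 1 (re - k*y))) by
      (apply Rmin_pos; [lra| apply Rmin_pos; lra]).
    assert (Hd1 : 0 < d < 1) by (unfold d; lra).
    assert (Hd2 : 0 < d < dbar) by (unfold d; lra).
    assert (Hd3 : d < re - k * y) by (unfold d; lra).
    pose proof (key d y Hd1 Hy) as Ke. specialize (H d Hd2).
    assert (P : C / (d * (1 - d)) > 0) by (apply Rdiv_lt_0_compat; nra).
    assert (E : (re - d) - k * (y - d) > 0) by nra.
    nra.
  - intros Hle. exists 1. split; [lra|]. intros d Hd.
    pose proof (key d y Hd Hy) as Ke.
    assert (P : C / (d * (1 - d)) > 0) by (apply Rdiv_lt_0_compat; nra).
    assert (E : (re - d) - k * (y - d) <= 0) by nra.
    nra.
Qed.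

Lemma S_hi y : 0 <= y <= 1 ->
  ((exists dbar, dbar > 0 /\ forall d, 0 < d < dbar -> F d >= g h (1 - d) y z) <-> 1 - re <= k * (1 - y)).
Proof.
  intros Hy. pose proof k_ge0 as K0. split.
  - intros [dbar [Hd H]]. destruct (Rle_lt_dec (1 - re) (k * (1 - y))) as [|Hgt]; [auto|exfalso].
    set (e := (1 - re) - k * (1 - y)).
    set (d := Rmin dbar (Rmin 1 e) / 2).
    assert (m1 := Rmin_l dbar (Rmin 1 e)).
    assert (m2 := Rmin_r dbar (Rmin 1 e)).
    assert (m3 := Rmin_l 1 e). assert (m4 := Rmin_r 1 e).
    assert (m5 : 0 < Rmin dbar (Rmin 1 e)) by
      (apply Rmin_pos; [lra| apply Rmin_pos; unfold e; lra]).
    assert (Hd1 : 0 < 1 - d < 1) by (unfold d; lra).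
    assert (Hd2 : 0 < d < dbar) by (unfold d; lra).
    assert (Hd3 : d < e) by (unfold d; lra).
    pose proof (key (1 - d) y Hd1 Hy) as Ke. specialize (H d Hd2).
    replace (1 - (1 - d)) with d in Ke by ring.
    assert (P : C / ((1 - d) * d) > 0) by (apply Rdiv_lt_0_compat; nra).
    assert (E : (re - (1 - d)) - k * (y - (1 - d)) < 0) by (unfold e in Hd3; nra).
    nra.
  - intros Hle. exists 1. split; [lra|]. intros d Hd.
    assert (Hd1 : 0 < 1 - d < 1) by lra.
    pose proof (key (1 - d) y Hd1 Hy) as Ke.
    replace (1 - (1 - d)) with d in Ke by ring.
    assert (P : C / ((1 - d) * d) > 0) by (apply Rdiv_lt_0_compat; nra).
    assert (E : (re - (1 - d)) - k * (y - (1 - d)) >= 0) by nra.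
    nra.
Qed.

End Side.

Lemma equiv (re_w re_m c_w c_m C_w C_m r : R) (h_w h_m Finv_w Finv_m : R -> R)
  (Hc_w : c_w >= 0) (Hc_m : c_m >= 0) (HC_w : C_w > 0) (HC_m : C_m > 0) (Hr : r > 0)
  (Hh_w : forall u, 0 < u <= 1 -> h_w u = c_w / u)
  (Hh_m : forall u, 0 < u <= 1 -> h_m u = c_m / u)
  (HF_w : forall u, 0 < u < 1 -> Finv_w (1 - u) = C_w * (re_w - u) / (u * (1 - u)))
  (HF_m : forall u, 0 < u < 1 -> Finv_m (1 - u) = C_m * (re_m - u) / (u * (1 - u)))
  (Ka : 1 / r * c_w / C_w < 1) (Kb : r * c_m / C_m < 1) (x y : R) :
  is_equilibrium Finv_w Finv_m h_w h_m r x y <->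
  EqA (1 / r * c_w / C_w) (r * c_m / C_m) re_w re_m x y.
Proof.
  assert (Hz : 1 / r > 0) by (apply Rdiv_lt_0_compat; lra).
  pose proof (S_int _ _ _ _ _ _ Hc_w HC_w Hz Hh_w HF_w Ka) as Iw.
  pose proof (S_int _ _ _ _ _ _ Hc_m HC_m Hr Hh_m HF_m Kb) as Im.
  pose proof (S_lo _ _ _ _ _ _ Hc_w HC_w Hz Hh_w HF_w Ka) as Lw.
  pose proof (S_lo _ _ _ _ _ _ Hc_m HC_m Hr Hh_m HF_m Kb) as Lm.
  pose proof (S_hi _ _ _ _ _ _ Hc_w HC_w Hz Hh_w HF_w Ka) as Uw.
  pose proof (S_hi _ _ _ _ _ _ Hc_m HC_m Hr Hh_m HF_m Kb) as Um.
  unfold is_equilibrium, EqA. split.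
  - intros (Hx & Hy & A1 & A2 & A3 & A4 & A5 & A6).
    repeat split; try tauto.
    + intro h. apply (Iw x y h Hy). auto.
    + intro h. apply (Im y x h Hx). auto.
    + intro h. apply (Lw y Hy). auto.
    + intro h. apply (Uw y Hy). auto.
    + intro h. apply (Um x Hx). auto.
    + intro h. apply (Lm x Hx). auto.
  - intros (Hx & Hy & A1 & A2 & A3 & A4 & A5 & A6).
    repeat split; try tauto.
    + intro h. apply (Iw x y h Hy). auto.
    + intro h. apply (Im y x h Hx). auto.
    + intro h. apply (Lw y Hy). auto.
    + intro h. apply (Uw y Hy). auto.
    + intro h. apply (Um x Hx). auto.
    + intro h. apply (Lm x Hx). auto.
Qed.

Lemma convP a b ew em : ew > 0 -> (a * em / ew + b < 1 <-> a*em + b*ew - ew < 0).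
Proof. intros. replace (a*em) with ((a*em/ew)*ew) at 2 by (field; lra). split; intros; nra. Qed.
Lemma convQ a b ew em : em < 1 -> (a + b * (1 - ew) / (1 - em) < 1 <-> a*(1-em) + b*(1-ew) - (1-em) < 0).
Proof. intros. replace (b*(1-ew)) with ((b*(1-ew)/(1-em))*(1-em)) at 2 by (field; lra). split; intros; nra. Qed.

Theorem proposition3
  (mu_w mu_m re_w re_m c_w c_m C_w C_m : R)
  (h_w h_m Finv_w Finv_m : R -> R)
  (Hmu_w : mu_w > 0) (Hmu_m : mu_m > 0)
  (Hre_w : 0 < re_w < 1) (Hre_m : 0 < re_m < 1)
  (Hc_w : c_w >= 0) (Hc_m : c_m >= 0)
  (HC_w : C_w > 0) (HC_m : C_m > 0)
  (Hh_w : forall u, 0 < u <= 1 -> h_w u = c_w / u)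
  (Hh_m : forall u, 0 < u <= 1 -> h_m u = c_m / u)
  (HF_w : forall u, 0 < u < 1 -> Finv_w (1 - u) = C_w * (re_w - u) / (u * (1 - u)))
  (HF_m : forall u, 0 < u < 1 -> Finv_m (1 - u) = C_m * (re_m - u) / (u * (1 - u))) :
  let r := mu_w / mu_m in
  let gam_w := mu_m / mu_w * (c_w / C_w) in
  let gam_m := mu_w / mu_m * (c_m / C_m) in
  0 < re_w < re_m -> re_m < 1 -> gam_w + gam_m < 1 ->
  exists rw rm,
    is_equilibrium Finv_w Finv_m h_w h_m r rw rm /\
    (forall rw' rm', is_equilibrium Finv_w Finv_m h_w h_m r rw' rm' ->
        rw' = rw /\ rm' = rm) /\
    (Rmax (gam_w * re_m / re_w + gam_m) (gam_w + gam_m * (1 - re_w) / (1 - re_m)) < 1 ->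
        rw = re_w - gam_w / (1 - gam_w - gam_m) * (re_m - re_w) /\
        rm = re_m + gam_m / (1 - gam_w - gam_m) * (re_m - re_w)) /\
    (gam_w * re_m / re_w + gam_m >= 1 -> gam_m < 1 - re_m ->
        rw = 0 /\ rm = re_m / (1 - gam_m)) /\
    (gam_w < re_w -> gam_w + gam_m * (1 - re_w) / (1 - re_m) >= 1 ->
        rw = (re_w - gam_w) / (1 - gam_w) /\ rm = 1) /\
    (gam_w >= re_w -> gam_m >= 1 - re_m ->
        rw = 0 /\ rm = 1).
Proof.
  intros r gam_w gam_m Hw Hm Hg.
  assert (Hr : r > 0) by (unfold r; apply Rdiv_lt_0_compat; lra).
  assert (Ea : 1 / r * c_w / C_w = gam_w) by (unfold r, gam_w; field; lra).
  assert (Eb : r * c_m / C_m = gam_m) by (unfold r, gam_m; field; lra).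
  assert (ga : gam_w >= 0).
  { unfold gam_w. apply Rle_ge. apply Rmult_le_pos.
    - left; apply Rdiv_lt_0_compat; lra.
    - unfold Rdiv. apply Rmult_le_pos; [lra| left; apply Rinv_0_lt_compat; lra]. }
  assert (gb : gam_m >= 0).
  { unfold gam_m. apply Rle_ge. apply Rmult_le_pos.
    - left; apply Rdiv_lt_0_compat; lra.
    - unfold Rdiv. apply Rmult_le_pos; [lra| left; apply Rinv_0_lt_compat; lra]. }
  assert (EQ : forall x y, is_equilibrium Finv_w Finv_m h_w h_m r x y <->
                 EqA gam_w gam_m re_w re_m x y).
  { intros x y. rewrite <- Ea, <- Eb. apply equiv; auto; lra. }
  assert (Hab : gam_w + gam_m < 1) by lra.
  assert (Hew : 0 < re_w) by lra. assert (Hlt : re_w < re_m) by lra.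
  pose proof (classify gam_w gam_m re_w re_m ga gb Hab Hew Hlt Hm) as Cl.
  assert (Main : exists x y, EqA gam_w gam_m re_w re_m x y).
  { destruct (cover gam_w gam_m re_w re_m ga gb Hab Hew Hlt Hm) as [c|[c|[c|c]]].
    - eexists; eexists; apply E1; eauto.
    - eexists; eexists; apply E2; eauto.
    - eexists; eexists; apply E3; eauto.
    - eexists; eexists; apply E4; eauto. }
  destruct Main as [x [y Hxy]].
  exists x, y. split; [apply EQ; auto|]. split.
  { intros x' y' H'. apply EQ in H'.
    destruct (cover gam_w gam_m re_w re_m ga gb Hab Hew Hlt Hm) as [c|[c|[c|c]]].
    - destruct (L1 _ _ _ _ ga gb Hab Hew Hlt Hm _ _ H' c).
      destruct (L1 _ _ _ _ ga gb Hab Hew Hlt Hm _ _ Hxy c). split; congruence.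
    - destruct (L2 _ _ _ _ ga gb Hab Hew Hlt Hm _ _ H' c).
      destruct (L2 _ _ _ _ ga gb Hab Hew Hlt Hm _ _ Hxy c). split; congruence.
    - destruct (L3 _ _ _ _ ga gb Hab Hew Hlt Hm _ _ H' c).
      destruct (L3 _ _ _ _ ga gb Hab Hew Hlt Hm _ _ Hxy c). split; congruence.
    - destruct (L4 _ _ _ _ ga gb Hab Hew Hlt Hm _ _ H' c).
      destruct (L4 _ _ _ _ ga gb Hab Hew Hlt Hm _ _ Hxy c). split; congruence. }
  split; [|split; [|split]].
  - intros Hmax.
    assert (P1 : gam_w * re_m / re_w + gam_m < 1) by
      (eapply Rle_lt_trans; [apply Rmax_l|exact Hmax]).
    assert (Q1 : gam_w + gam_m * (1 - re_w) / (1 - re_m) < 1) by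
      (eapply Rle_lt_trans; [apply Rmax_r|exact Hmax]).
    apply convP in P1; [|lra]. apply convQ in Q1; [|lra].
    exact (L1 _ _ _ _ ga gb Hab Hew Hlt Hm _ _ Hxy (conj P1 Q1)).
  - intros P1 B1.
    assert (P2 : gam_w * re_m + gam_m * re_w - re_w >= 0).
    { destruct (Rlt_or_le (gam_w * re_m + gam_m * re_w - re_w) 0) as [h|h]; [|lra].
      apply (convP gam_w gam_m re_w re_m Hew) in h. lra. }
    exact (L2 _ _ _ _ ga gb Hab Hew Hlt Hm _ _ Hxy (conj P2 B1)).
  - intros A1 Q1.
    assert (Q2 : gam_w * (1 - re_m) + gam_m * (1 - re_w) - (1 - re_m) >= 0).
    { destruct (Rlt_or_le (gam_w * (1 - re_m) + gam_m * (1 - re_w) - (1 - re_m)) 0) as [h|h]; [|lra].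
      apply (convQ gam_w gam_m re_w re_m Hm) in h. lra. }
    exact (L3 _ _ _ _ ga gb Hab Hew Hlt Hm _ _ Hxy (conj A1 Q2)).
  - intros A1 B1.
    exact (L4 _ _ _ _ ga gb Hab Hew Hlt Hm _ _ Hxy (conj A1 B1)).
Qed.
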